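(* For all integers $n\geq0$, \[ \sum_{j=0}^n\binom{2j}{j}\frac{O_j-H_{n-j}}{4^j(n+1-j)}=0. \]
   Context: $H_n=\sum_{j=1}^n\frac1j$ ($H_0=0$) and $O_n=\sum_{j=1}^n\frac1{2j-1}$ ($O_0=0$). *)

(* Defs.v *)
From mathcomp Require Import all_boot all_order all_algebra.
Set Implicit Arguments. Unset Strict Implicit. Unset Printing Implicit Defensive.
Import Order.TTheory GRing.Theory Num.Theory.
Local Open Scope ring_scope.

Definition H (n : nat) : rat := \sum_(1 <= j < n.+1) (j%:R)^-1.

Definition O (n : nat) : rat := \sum_(1 <= j < n.+1) ((2 * j - 1)%:R)^-1.

(* Main.v *)
Require Import Defs.
From mathcomp Require Import all_boot all_order all_algebra.
From mathcomp Require Import ring zify.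
Import Order.TTheory GRing.Theory Num.Theory.
Local Open Scope ring_scope.

Definition l (k : nat) : rat := (k%:R)^-1.
Lemma l0 : l 0 = 0. Proof. by rewrite /l invr0. Qed.

Lemma H_fwd p : H p = \sum_(k < p) l k.+1.
Proof. by rewrite /H big_add1 /= big_mkord. Qed.

Lemma H_bwd p : H p = \sum_(k < p) l (p - k).
Proof. rewrite /H big_rev_mkord subn1 /=; apply: eq_bigr => k _; by rewrite subSS. Qed.

Lemma LL m : \sum_(k < m.+1) l k * l (m - k) = 2 * H m.-1 * l m.
Proof.
case: m => [|p]; first by rewrite big_ord_recl big_ord0 /= l0 !mulr0 addr0.
rewrite big_ord_recl l0 mul0r add0r big_ord_recr /= subnn l0 mulr0 addr0.
transitivity (\sum_(k < p) l p.+1 * (l (bump 0 k) + l (p - k))).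
  apply: eq_bigr => k _; have hk := ltn_ord k.
  rewrite /bump /= add1n subSS /l.
  have hd : (p - k)%:R != 0 :> rat by rewrite pnatr_eq0; lia.
  have e : (p.+1)%:R = (k.+1)%:R + (p - k)%:R :> rat by rewrite -natrD; congr (_%:R); lia.
  have e1 : 1 + k%:R = k.+1%:R :> rat by rewrite addrC natr1.
  rewrite e. field. by rewrite hd e1 -e !pnatr_eq0.

rewrite -big_distrr big_split /= -H_bwd.
rewrite [X in X + _](_ : _ = H p); last by rewrite H_fwd.
rewrite /=; ring.
Qed.
Lemma bin_rec (j : nat) : (j.+1 * 'C((j.+1).*2, j.+1) = 2 * (j.*2.+1) * 'C(j.*2, j))%N.
Proof.
have E1 := mul_bin_diag (j.*2.+2) j.
have E2 := mul_bin_diag (j.*2.+1) j.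
have E3 : 'C(j.*2.+1, j.+1) = 'C(j.*2.+1, j).
  rewrite -{1}(@bin_sub (j.*2.+1) j); last lia.
  congr binomial; lia.
rewrite /= E3 in E2.
rewrite doubleS -E1 /= -mulnA E2; lia.
Qed.

Definition a (j : nat) : rat := 'C(j.*2, j)%:R / (4 ^ j)%:R.

Lemma a_rec j : a j.+1 * (j.*2.+2)%:R = a j * (j.*2.+1)%:R.
Proof.
have HC : ('C((j.+1).*2, j.+1) * j.*2.+2 = 4 * j.*2.+1 * 'C(j.*2, j))%N.
  have := bin_rec j; nia.
rewrite /a mulrAC -natrM HC expnS !natrM.
have h4 : (4 ^ j)%:R != 0 :> rat by rewrite pnatr_eq0 expn_eq0.
field. by rewrite h4.
Qed.

Definition c (j : nat) : rat := \sum_(i < j.+1) a i * l (j - i).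

Lemma c_rec j : (j.*2.+2)%:R * c j.+1 = 2 * a j + (j.*2.+1)%:R * c j.
Proof.
rewrite /c big_ord_recr /= subnn l0 mulr0 addr0 mulr_sumr.
transitivity (\sum_(i < j.+1) (2 * a i + 2 * (i%:R * a i * l (j.+1 - i)))).
  apply: eq_bigr => i _; have hi := ltn_ord i.
  have hd : (j.+1 - i)%:R != 0 :> rat by rewrite pnatr_eq0; lia.
  have e : (j.*2.+2)%:R = 2 * (i%:R + (j.+1 - i)%:R) :> rat.
    by rewrite -natrD -natrM; congr (_%:R); lia.
  rewrite e /l; field; by rewrite hd.
rewrite big_split /= -mulr_sumr -mulr_sumr big_ord_recr /= big_ord_recl /= mulr0n !mul0r add0r.
rewrite big_ord_recr /= subnn l0 mulr0 addr0.
transitivity (2 * a j + \sum_(i < j) (2 * a i + 2 * (i.+1%:R * a i.+1 * l (j - i)))).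
  have eS : \sum_(i < j) (bump 0 i)%:R * a (bump 0 i) * l (j.+1 - bump 0 i)
      = \sum_(i < j) i.+1%:R * a i.+1 * l (j - i).
    by apply: eq_bigr => i _; rewrite /bump /= add1n subSS.
  rewrite eS big_split /= -!mulr_sumr; ring.
congr (_ + _); rewrite mulr_sumr; apply: eq_bigr => i _; have hi := ltn_ord i.
have ea : 2 * (i.+1%:R * a i.+1) = (i.*2.+1)%:R * a i.
  have e2 : (i.*2.+2)%:R = 2 * i.+1%:R :> rat by rewrite -natrM mul2n doubleS.
  by rewrite [RHS]mulrC -a_rec e2; ring.
rewrite (_ : 2 * (i.+1%:R * a i.+1 * l (j - i)) = (i.*2.+1)%:R * a i * l (j - i)); last by rewrite -ea; ring.
have hd : (j - i)%:R != 0 :> rat by rewrite pnatr_eq0; lia.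
have e : (j.*2.+1)%:R = (i.*2.+1)%:R + 2 * (j - i)%:R :> rat.
  by rewrite -natrM -natrD; congr (_%:R); lia.
rewrite e /l; field; by rewrite hd.
Qed.

Lemma O_rec j : O j.+1 = O j + l (j.*2.+1).
Proof.
rewrite /O big_nat_recr //= /l; congr (_ + (_%:R)^-1); lia.
Qed.

Lemma b_rec j : (j.*2.+2)%:R * (2 * (a j.+1 * O j.+1))
   = 2 * a j + (j.*2.+1)%:R * (2 * (a j * O j)).
Proof.
rewrite (_ : _ * _ = 2 * (a j.+1 * (j.*2.+2)%:R) * O j.+1); last ring.
rewrite a_rec O_rec /l.
have hd : (j.*2.+1)%:R != 0 :> rat by rewrite pnatr_eq0.
field; by rewrite addrC natr1.
Qed.

Lemma c_eq j : c j = 2 * (a j * O j).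
Proof.
elim: j => [|j IH].
  by rewrite /c big_ord_recl big_ord0 /= l0 /O big_geq // !mulr0 addr0.
have hd : (j.*2.+2)%:R != 0 :> rat by rewrite pnatr_eq0.
apply: (mulfI hd); by rewrite c_rec b_rec IH.
Qed.

Theorem corollary5 (n : nat) :
  \sum_(0 <= j < n.+1)
     ('C(2 * j, j))%:R * (O j - H (n - j)) / ((4 ^ j)%:R * ((n + 1 - j)%:R))
  = 0 :> rat.
Proof.
pose PA := \poly_(i < n.+2) a i.
pose PL := \poly_(i < n.+2) l i.
have C1 : forall m, (m < n.+2)%N -> (PA * PL)`_m = c m.
  move=> m hm; rewrite coefM /c; apply: eq_bigr => i _; have hi := ltn_ord i.
  rewrite !coef_poly ifT; last lia. by rewrite ifT; last lia.
have C2 : forall m, (m < n.+2)%N -> (PL * PL)`_m = 2 * H m.-1 * l m.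
  move=> m hm; rewrite coefM -LL; apply: eq_bigr => i _; have hi := ltn_ord i.
  rewrite !coef_poly ifT; last lia. by rewrite ifT; last lia.
have E1 : (PA * PL * PL)`_n.+1 = 2 * \sum_(j < n.+2) a j * O j * l (n.+1 - j).
  rewrite coefM mulr_sumr; apply: eq_bigr => i _; have hi := ltn_ord i.
  rewrite C1 // c_eq coef_poly ifT; last lia. ring.
have E2 : (PA * (PL * PL))`_n.+1 = 2 * \sum_(j < n.+2) a j * H (n - j) * l (n.+1 - j).
  rewrite coefM mulr_sumr; apply: eq_bigr => i _; have hi := ltn_ord i.
  rewrite C2; last lia. rewrite coef_poly ifT; last lia.
  have -> : (n.+1 - i).-1 = (n - i)%N by lia.
  ring.
have XY : \sum_(j < n.+2) a j * O j * l (n.+1 - j)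
        = \sum_(j < n.+2) a j * H (n - j) * l (n.+1 - j).
  apply: (mulfI (_ : 2 != 0 :> rat)) => //; by rewrite -E1 -E2 mulrA.
move: XY; rewrite big_ord_recr [in X in _ = X -> _]big_ord_recr /= subnn l0 !mulr0 !addr0.
move/eqP; rewrite -subr_eq0 -sumrB => /eqP H0.
rewrite big_mkord -[RHS]H0.
apply: eq_bigr => j _; have hj := ltn_ord j.
rewrite /a /l mul2n addn1 invfM; ring.
Qed.
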